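(* Let $t$ be a positive integer, $s\ge 2$, and let $G=K(n_1,\dots,n_s)$ be a complete $s$-partite graph with $n_1\ge n_2\ge\cdots\ge n_s\ge 1$. If $n_1\ge 2t$ then $\beta_t(G)=n_1$, and if $n_1\le 2t$ then $\beta_t(G)\le 2t$.
   Context: $K(n_1,\dots,n_s)$ denotes the complete $s$-partite graph whose parts have $n_1,\dots,n_s$ vertices. A set $S\subseteq V(G)$ is $t$-sparse if the induced subgraph $G[S]$ has maximum degree at most $t$; $\beta_t(G)$ is the maximum size of a $t$-sparse set of $G$. *)

(* Defs.v *)
From mathcomp Require Import all_boot.
Set Implicit Arguments. Unset Strict Implicit. Unset Printing Implicit Defensive.

(* A simple graph on a finite vertex type V is given by a symmetric,
   irreflexive adjacency relation adj. *)

Definition t_sparse (V : finType) (adj : rel V) (t : nat) (S : {set V}) : bool :=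
  [forall v in S, #|[set u in S | adj v u]| <= t].

Definition beta_t (V : finType) (adj : rel V) (t : nat) : nat :=
  \max_(S : {set V} | t_sparse adj t S) #|S|.

(* Vertices are pairs (i, j) with
   i < s the part index and j < n_(i+1) the index within the part. *)
Definition cmp_vertex (ns : seq nat) : finType :=
  {i : 'I_(size ns) & 'I_(nth 0 ns i)}.

Definition cmp_adj (ns : seq nat) : rel (cmp_vertex ns) :=
  fun u v => tag u != tag v.

(* Main.v *)
Require Import Defs.
From mathcomp Require Import all_boot.

Lemma sparse_bound (ns : seq nat) (t : nat) (S : {set cmp_vertex ns}) :
  sorted geq ns -> t_sparse (@cmp_adj ns) t S ->
  #|S| <= maxn (nth 0 ns 0) (2 * t).
Proof.
move=> srt /forallP sp.
have spv : forall v, v \in S -> #|[set u in S | cmp_adj v u]| <= t.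
  by move=> v vS; have := sp v; rewrite vS.
case: (set_0Vmem S) => [->|[v vS]]; first by rewrite cards0.
case: (boolP [exists w in S, tag w != tag v]) => [/existsP[w /andP[wS nwv]]|].
  apply: leq_trans (leq_maxr _ _).
  have sub : S \subset [set u in S | cmp_adj v u] :|: [set u in S | cmp_adj w u].
    apply/subsetP => u uS; rewrite !inE uS /cmp_adj /=.
    case: (eqVneq (tag v) (tag u)) => //= e.
    by rewrite -e.
  apply: leq_trans (subset_leq_card sub) _.
  apply: leq_trans (leq_card_setU _ _) _.
  by rewrite mul2n -addnn leq_add // spv.
move/existsPn => allv.
apply: leq_trans (leq_maxl _ _).
have sub : S \subset [set Tagged (fun i : 'I_(size ns) => 'I_(nth 0 ns i)) j | j : 'I_(nth 0 ns (tag v))].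
  apply/subsetP => u uS; have := allv u; rewrite uS /= negbK.
  case: u uS => i j /= _ /eqP e; subst i.
  by apply/imsetP; exists j.
apply: leq_trans (subset_leq_card sub) _.
apply: leq_trans (leq_imset_card _ _) _.
rewrite card_ord.
have geq_trans : transitive geq by move=> a b c h1 h2; exact: leq_trans h2 h1.
have := @sorted_leq_nth _ geq geq_trans (@leqnn) 0 ns srt 0 (tag v).
rewrite !inE /=; apply => //.
by apply: leq_ltn_trans (ltn_ord (tag v)).
Qed.

Theorem corollary2p2 (t s : nat) (ns : seq nat) :
  0 < t -> 2 <= s -> size ns = s ->
  sorted geq ns -> all (fun m => 0 < m) ns ->
  (2 * t <= nth 0 ns 0 -> beta_t (@cmp_adj ns) t = nth 0 ns 0) /\
  (nth 0 ns 0 <= 2 * t -> beta_t (@cmp_adj ns) t <= 2 * t).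
Proof.
move=> tpos s2 sz srt pos.
have ub : beta_t (@cmp_adj ns) t <= maxn (nth 0 ns 0) (2 * t).
  by apply/bigmax_leqP => S; exact: sparse_bound.
have z : 0 < size ns by rewrite sz; apply: leq_trans s2.
pose i0 : 'I_(size ns) := Ordinal z.
pose S0 := [set Tagged (fun i : 'I_(size ns) => 'I_(nth 0 ns i)) j | j : 'I_(nth 0 ns i0)].
have S0sp : t_sparse (@cmp_adj ns) t S0.
  apply/forallP => v; apply/implyP => /imsetP [j _ ->].
  apply: leq_trans (leq0n t) => //; rewrite leqn0 cards_eq0; apply/eqP/setP => u.
  rewrite !inE; apply/negbTE; apply/negP => /andP[/imsetP[k _ ->]].
  by [].
have lb : nth 0 ns 0 <= beta_t (@cmp_adj ns) t.
  have := @leq_bigmax_cond _ (t_sparse (@cmp_adj ns) t) (fun S => #|S|) S0 S0sp.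
  rewrite card_imset ?cardsT ?card_ord //.
  by move=> a b; exact: eq_from_Tagged.
split=> h.
  by apply/eqP; rewrite eqn_leq lb andbT; move: ub; rewrite (maxn_idPl h).
by move: ub; rewrite (maxn_idPr h).
Qed.
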